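(* Let $E$ be a linear subspace of $\mathbb{R}^d$, $\|\cdot\|_c$ and $\|\cdot\|_s$ norms on $\mathbb{R}^d$ such that $x\mapsto\frac12\|x\|_s^2$ is $L$-smooth with respect to $\|\cdot\|_s$, $p_{c,E}(x)=\min_{y\in E}\|x-y\|_c$, $p_{s,E}(x)=\min_{y\in E}\|x-y\|_s$, $\theta>0$, and $$M_E(x)=\min_{y\in\mathbb{R}^d}\left\{\tfrac12p_{c,E}^2(y)+\tfrac1{2\theta}\|x-y\|_s^2\right\}.$$ Then: (1) $M_E$ is convex and $M_E(y)\le M_E(x)+\langle\nabla M_E(x),y-x\rangle+\frac{L}{2\theta}p_{s,E}^2(y-x)$ for all $x,y\in\mathbb{R}^d$. (2) If $\ell_{cs},u_{cs}>0$ satisfy $\ell_{cs}\|\cdot\|_s\le\|\cdot\|_c\le u_{cs}\|\cdot\|_s$, and $\ell_{cm}=\sqrt{1+\theta\ell_{cs}^2}$, $u_{cm}=\sqrt{1+\theta u_{cs}^2}$, then $\ell_{cm}^2M_E(x)\le\frac12p_{c,E}^2(x)\le u_{cm}^2M_E(x)$ for all $x\in\mathbb{R}^d$. (3) $\|\nabla M_E(x)-\nabla M_E(y)\|_{s,*}\le\frac{L}{\theta}p_{s,E}(x-y)$ for all $x,y\in\mathbb{R}^d$, where $\|\cdot\|_{s,*}$ is the dual norm of $\|\cdot\|_s$.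
   Context: A function $f$ is $L$-smooth with respect to a norm $\|\cdot\|$ if it is differentiable and $\|\nabla f(x)-\nabla f(y)\|_*\le L\|x-y\|$ for all $x,y$, where $\|\cdot\|_*$ is the dual norm. *)

(* Defs.v *)
From HB Require Import structures.
From mathcomp Require Import all_boot all_order all_algebra.
From mathcomp Require Import all_classical all_reals all_analysis.
Set Implicit Arguments. Unset Strict Implicit. Unset Printing Implicit Defensive.
Import Order.TTheory GRing.Theory Num.Theory.
Import numFieldNormedType.Exports.
Local Open Scope classical_set_scope.
Local Open Scope ring_scope.

Definition is_norm {R : realType} {d : nat} (N : 'rV[R]_d -> R) : Prop :=
  [/\ forall x, 0 <= N x,
      forall x, N x = 0 -> x = 0,
      forall (a : R) x, N (a *: x) = `|a| * N x
    & forall x y, N (x + y) <= N x + N y].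

Definition inner {R : realType} {d : nat} (u v : 'rV[R]_d) : R :=
  \sum_(i < d) u ord0 i * v ord0 i.

Definition dual_norm {R : realType} {d : nat} (N : 'rV[R]_d -> R)
  (g : 'rV[R]_d) : R := sup [set inner g v | v in [set v | N v <= 1]].

Definition grad {R : realType} {d : nat} (f : 'rV[R]_d -> R^o) (x : 'rV[R]_d)
  : 'rV[R]_d := \row_(i < d) ('d f x (delta_mx ord0 i : 'rV[R]_d)).

Definition L_smooth {R : realType} {d : nat} (N : 'rV[R]_d -> R)
  (f : 'rV[R]_d -> R^o) (L : R) : Prop :=
  (forall x, differentiable f x) /\
  (forall x y, dual_norm N (grad f x - grad f y) <= L * N (x - y)).

(* Distance to a subspace E in norm N: min_{y in E} N (x - y) (written as inf;
   the minimum is attained). *)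
Definition dist_sub {R : realType} {d : nat} (N : 'rV[R]_d -> R)
  (E : {vspace 'rV[R]_d}) (x : 'rV[R]_d) : R :=
  inf [set N (x - y) | y in [set y | y \in E]].

Definition ME {R : realType} {d : nat} (Nc Ns : 'rV[R]_d -> R)
  (E : {vspace 'rV[R]_d}) (theta : R) (x : 'rV[R]_d) : R :=
  inf [set (dist_sub Nc E y) ^+ 2 / 2 + (Ns (x - y)) ^+ 2 / (2 * theta)
       | y in [set: 'rV[R]_d]].

(* Main.v *)
Require Import Defs.
From HB Require Import structures.
From mathcomp Require Import all_boot all_order all_algebra.
From mathcomp Require Import all_classical all_reals all_analysis.
From mathcomp Require Import ring lra.
Import Order.TTheory GRing.Theory Num.Theory.
Import numFieldNormedType.Exports.
Local Open Scope classical_set_scope.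
Local Open Scope ring_scope.
Section S.
Context {R : realType}.
Lemma infimg_le (T : Type) (A : set T) (F : T -> R) y :
  (forall z, A z -> 0 <= F z) -> A y -> inf [set F z | z in A] <= F y.
Proof.
move=> F0 Ay; apply: ge_inf; last by exists y.
by exists 0 => _ [z Az <-]; exact: F0.
Qed.

Lemma infimg_ge (T : Type) (A : set T) (F : T -> R) m :
  A !=set0 -> (forall z, A z -> m <= F z) -> m <= inf [set F z | z in A].
Proof.
move=> [y Ay] H; apply: lb_le_inf; first by exists (F y), y.
by move=> _ [z Az <-]; exact: H.
Qed.

Lemma infimg_approx (T : Type) (A : set T) (F : T -> R) e :
  A !=set0 -> (forall z, A z -> 0 <= F z) -> 0 < e ->
  exists2 y, A y & F y < inf [set F z | z in A] + e.
Proof.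
move=> [y0 Ay0] F0 e0.
have [|_ [y Ay <-] H] := @inf_adherent _ [set F z | z in A] e e0.
  split; first by exists (F y0), y0.
  by exists 0 => _ [z Az <-]; exact: F0.
by exists y.
Qed.

Lemma infimg_ge0 (T : Type) (A : set T) (F : T -> R) :
  A !=set0 -> (forall z, A z -> 0 <= F z) -> 0 <= inf [set F z | z in A].
Proof. by move=> A0 F0; apply: infimg_ge. Qed.

Lemma le_eps (a b : R) : (forall e, 0 < e -> a <= b + e) -> a <= b.
Proof.
move=> H; rewrite leNgt; apply/negP => ba.
have : 0 < (a - b) / 2 by lra.
move=> /H; lra.
Qed.
End S.
Section Norms.
Context {R : realType} {d : nat}.
Local Notation V := 'rV[R]_d.

Lemma coord_le_norm (x : V) i : `|x ord0 i| <= `|x|.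
Proof.
rewrite [leRHS]/Num.norm /= mx_normrE; apply/bigmax_geP; right => /=.
by exists (ord0, i).
Qed.

Lemma lip_cont (f : V -> R^o) K :
  (forall x y, `|f x - f y| <= K * `|x - y|) -> continuous f.
Proof.
move=> H x; apply/(@cvgrPdist_lt _ _ _ (nbhs x)) => e e0.
have K1 : 0 < `|K| + 1 by rewrite ltr_pwDr // normr_ge0.
near=> z.
apply: (le_lt_trans (H x z)).
apply: (le_lt_trans (y := (`|K| + 1) * `|x - z|)).
  apply: ler_wpM2r; first exact: normr_ge0.
  by rewrite (le_trans (ler_norm K)) // lerDl.
rewrite -ltr_pdivlMl //.
near: z; apply: cvgr_dist_lt => //; by rewrite mulrC divr_gt0.
Unshelve. all: by end_near. Qed.

Context {N : V -> R}.
Context (hN : is_norm N).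

Lemma N_ge0 x : 0 <= N x. Proof. by case: hN. Qed.
Lemma N_eq0 x : N x = 0 -> x = 0. Proof. by case: hN => _ H _ _; exact: H. Qed.
Lemma NZ a x : N (a *: x) = `|a| * N x. Proof. by case: hN. Qed.
Lemma NT x y : N (x + y) <= N x + N y. Proof. by case: hN. Qed.

Lemma N0 : N 0 = 0.
Proof. by rewrite -(scale0r (0 : V)) NZ normr0 mul0r. Qed.

Lemma NN x : N (- x) = N x.
Proof. by rewrite -scaleN1r NZ normrN normr1 mul1r. Qed.

Lemma NB x y : N (x - y) = N (y - x).
Proof. by rewrite -NN opprB. Qed.

Lemma NZp a x : 0 <= a -> N (a *: x) = a * N x.
Proof. by move=> a0; rewrite NZ ger0_norm. Qed.

Lemma Ndiff x y : `|N x - N y| <= N (x - y).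
Proof.
rewrite ler_norml; apply/andP; split.
  have := NT (y - x) x; rewrite subrK NB; lra.
have := NT (x - y) y; rewrite subrK; lra.
Qed.

Lemma N_sum (I : Type) (r : seq I) (P : pred I) (F : I -> V) :
  N (\sum_(i <- r | P i) F i) <= \sum_(i <- r | P i) N (F i).
Proof.
elim/big_ind2 : _ => //; first by rewrite N0.
move=> a b c e Hab Hce; apply: (le_trans (NT _ _)); exact: lerD.
Qed.

Lemma N_upper : exists2 C, 0 <= C & forall x, N x <= C * `|x|.
Proof.
exists (\sum_(i < d) N (delta_mx ord0 i)).
  by apply: sumr_ge0 => i _; exact: N_ge0.
move=> x; rewrite {1}(row_sum_delta x).
apply: (le_trans (N_sum _ _ _ _)).
rewrite mulr_suml; apply: ler_sum => i _.
rewrite NZ mulrC; apply: ler_wpM2l; first exact: N_ge0.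
exact: coord_le_norm.
Qed.

Lemma N_cont : continuous N.
Proof.
have [C C0 HC] := N_upper.
apply: (@lip_cont _ C) => x y.
by apply: (le_trans (Ndiff x y)); exact: HC.
Qed.

End Norms.
Section Lower.
Context {R : realType} {d : nat}.
Local Notation V := 'rV[R]_d.
Context {N : V -> R}.
Context (hN : is_norm N).

Lemma sphere_compact : compact [set x : V | `|x| = 1].
Proof.
apply: bounded_closed_compact.
  suff H : bounded_near (fun x : V => x) (globally [set x : V | `|x| = 1]) by exact: H.
  rewrite /bounded_near; near=> M => x /= ->; near: M; apply: nbhs_pinfty_ge.
  by rewrite real1.
have -> : [set x : V | `|x| = 1] = (Num.norm : V -> R) @^-1` [set x | x = 1].
  by [].
apply: preimage_closed; last exact: closed_eq.
by move=> x _; exact: norm_continuous.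
Unshelve. all: by end_near. Qed.

Lemma N_lower : exists2 c, 0 < c & forall x, c * `|x| <= N x.
Proof.
have unit (x : V) : x != 0 -> `| (`|x|^-1 *: x) | = 1.
  move=> x0; rewrite normrZ normfV normr_id mulVf //.
  by rewrite normr_eq0.
have [[y Sy]|S0] := pselect ([set x : V | `|x| = 1] !=set0).
  have cN : {within [set x : V | `|x| = 1], continuous N}.
    by apply: continuous_subspaceT; exact: N_cont.
  have [c0 /set_mem Sc0 Hc0] := EVT_min_rV (ex_intro _ y Sy) sphere_compact cN.
  have Nc0 : 0 < N c0.
    rewrite lt_neqAle N_ge0 // andbT; apply/eqP => /esym /(N_eq0 hN) c00.
    by move: Sc0; rewrite /= c00 normr0 => /eqP; rewrite eq_sym oner_eq0.
  exists (N c0) => // x.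
  have [->|x0] := eqVneq x 0; first by rewrite normr0 mulr0 N_ge0.
  have := Hc0 _ (mem_set (unit x x0)).
  rewrite NZ // normfV normr_id ler_pdivlMl ?normr_gt0 //.
  by rewrite mulrC.
exists 1 => // x; rewrite mul1r.
have [->|x0] := eqVneq x 0; first by rewrite normr0 N_ge0.
by exfalso; apply: S0; exists (`|x|^-1 *: x); exact: unit.
Qed.
End Lower.
Section Inner.
Context {R : realType} {d : nat}.
Local Notation V := 'rV[R]_d.
Implicit Types (g h u v : V).

Lemma innerC u v : inner u v = inner v u.
Proof. by rewrite /inner; apply: eq_bigr => i _; rewrite mulrC. Qed.

Lemma innerDr g u v : inner g (u + v) = inner g u + inner g v.
Proof. by rewrite /inner -big_split; apply: eq_bigr => i _; rewrite mxE mulrDr. Qed.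

Lemma innerZr g a u : inner g (a *: u) = a * inner g u.
Proof. by rewrite /inner mulr_sumr; apply: eq_bigr => i _; rewrite mxE mulrCA. Qed.

Lemma innerDl g h u : inner (g + h) u = inner g u + inner h u.
Proof. by rewrite innerC innerDr !(innerC u). Qed.

Lemma innerZl a g u : inner (a *: g) u = a * inner g u.
Proof. by rewrite innerC innerZr innerC. Qed.

Lemma inner0r g : inner g 0 = 0.
Proof. by rewrite /inner big1 // => i _; rewrite mxE mulr0. Qed.

Lemma inner0l g : inner 0 g = 0.
Proof. by rewrite innerC inner0r. Qed.

Lemma innerNr g u : inner g (- u) = - inner g u.
Proof. by rewrite -scaleN1r innerZr mulN1r. Qed.

Lemma innerNl g u : inner (- g) u = - inner g u.
Proof. by rewrite innerC innerNr innerC. Qed.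

Lemma innerBr g u v : inner g (u - v) = inner g u - inner g v.
Proof. by rewrite innerDr innerNr. Qed.

Lemma innerBl g h u : inner (g - h) u = inner g u - inner h u.
Proof. by rewrite innerDl innerNl. Qed.

Lemma inner_delta g i : inner g (delta_mx ord0 i) = g ord0 i.
Proof.
rewrite /inner (bigD1 i) //= big1 ?addr0.
  by rewrite mxE !eqxx mulr1.
by move=> j ji; rewrite mxE (negbTE ji) andbF mulr0.
Qed.

Lemma inner_bound g u : `|inner g u| <= (\sum_i `|g ord0 i|) * `|u|.
Proof.
rewrite /inner mulr_suml; apply: (le_trans (ler_norm_sum _ _ _)).
apply: ler_sum => i _; rewrite normrM; apply: ler_wpM2l => //.
exact: coord_le_norm.
Qed.

Lemma inner_linear g : linear (fun u : V => (inner g u : R^o)).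
Proof. by move=> a u v; rewrite innerDr innerZr. Qed.

Definition innerL g : {linear V -> R^o} :=
  HB.pack (fun u : V => (inner g u : R^o)) (GRing.isLinear.Build _ _ _ _ _ (inner_linear g)).

Lemma innerL_cont g : continuous (innerL g).
Proof.
apply: (@lip_cont _ _ _ (\sum_i `|g ord0 i|)) => x y /=.
by rewrite -innerBr; exact: inner_bound.
Qed.

Lemma diff_quad (f : V -> R^o) (x G : V) C :
  (forall h, `|f (h + x) - f x - inner G h| <= C * `|h| ^+ 2) ->
  differentiable f x /\ 'd f x = (fun h => inner G h) :> (V -> R^o).
Proof.
move=> H.
have ho : f \o shift x = cst (f x) + innerL G +o_ (0 : V) id.
  apply/eqaddoP => eps eps0 /=.
  have C1 : 0 < `|C| + 1 by rewrite ltr_pwDr // normr_ge0.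
  near=> h.
  rewrite !fctE /= opprD addrA.
  apply: (le_trans (H h)).
  rewrite expr2 mulrA ler_wpM2r //.
  apply: (le_trans (y := (`|C| + 1) * `|h|)).
    apply: ler_wpM2r => //; by rewrite (le_trans (ler_norm C)) // lerDl.
  rewrite -ler_pdivlMl //.
  rewrite mulrC; near: h; apply: (@nbhs0_le R V).
  by rewrite divr_gt0.
have dE := diff_unique (innerL_cont G) ho.
split; last by rewrite dE.
apply/diff_locallyP; rewrite dE; split; first exact: innerL_cont.
exact: ho.
Unshelve. all: by end_near. Qed.
End Inner.
Section Dual.
Context {R : realType} {d : nat}.
Local Notation V := 'rV[R]_d.
Context {N : V -> R} (hN : is_norm N).

Lemma dual_has_sup g : has_sup [set inner g v | v in [set v | N v <= 1]].
Proof.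
split; first by exists (inner g 0), 0 => //=; rewrite N0.
have [c c0 Hc] := N_lower hN.
exists ((\sum_i `|g ord0 i|) / c) => _ [v /= Nv <-].
apply: (le_trans (ler_norm _)); apply: (le_trans (inner_bound _ _)).
rewrite ler_pdivlMr // -mulrA -[X in _ <= X]mulr1; apply: ler_wpM2l.
  by apply: sumr_ge0 => i _.
rewrite mulrC; exact: (le_trans (Hc v)).
Qed.

Lemma dual_ge0 g : 0 <= dual_norm N g.
Proof.
rewrite /dual_norm; apply: (le_trans (y := inner g 0)); first by rewrite inner0r.
apply: sup_upper_bound; first exact: dual_has_sup.
by exists 0 => //=; rewrite N0.
Qed.

Lemma dual_le g v : inner g v <= dual_norm N g * N v.
Proof.
have [->|v0] := eqVneq v 0; first by rewrite inner0r (N0 hN) mulr0.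
have Nv : 0 < N v.
  rewrite lt_neqAle N_ge0 // andbT; apply/eqP => /esym /(N_eq0 hN).
  by apply/eqP.
have : inner g ((N v)^-1 *: v) <= dual_norm N g.
  apply: sup_upper_bound; first exact: dual_has_sup.
  exists ((N v)^-1 *: v) => //=.
  by rewrite NZp // ?invr_ge0 ?N_ge0 // mulVf // gt_eqF.
by rewrite innerZr -ler_pdivlMl ?invr_gt0 // invrK mulrC.
Qed.

Lemma dual_adh g e : 0 < e ->
  exists2 v, N v <= 1 & dual_norm N g - e < inner g v.
Proof.
move=> e0; have [_ [v Nv <-] H] := sup_adherent e0 (dual_has_sup g).
by exists v.
Qed.
End Dual.
Section Dist.
Context {R : realType} {d : nat}.
Local Notation V := 'rV[R]_d.
Context {N : V -> R} (hN : is_norm N) (E : {vspace V}).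
Local Notation p := (dist_sub N E).

Lemma EA0 : [set y : V | y \in E] !=set0.
Proof. by exists 0; rewrite /= mem0v. Qed.

Lemma dist_ge0 x : 0 <= p x.
Proof. apply: infimg_ge0; first exact: EA0. by move=> z _; exact: N_ge0. Qed.

Lemma dist_le x e : e \in E -> p x <= N (x - e).
Proof. by move=> eE; apply: infimg_le => // z _; exact: N_ge0. Qed.

Lemma dist_approx x eps : 0 < eps -> exists2 e, e \in E & N (x - e) < p x + eps.
Proof.
move=> e0.
have [e eE H] := @infimg_approx R V [set y : V | y \in E] (fun y => N (x - y))
  eps EA0 (fun z _ => N_ge0 hN (x - z)) e0.
by exists e.
Qed.

Lemma dist_leN x : p x <= N x.
Proof. by rewrite -{2}(subr0 x); apply: dist_le; exact: mem0v. Qed.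

Lemma dist_glb x m : (forall e, e \in E -> m <= N (x - e)) -> m <= p x.
Proof. by move=> H; apply: infimg_ge; [exact: EA0 | move=> z /= /H]. Qed.

Lemma dist_tri x y : p x <= p y + N (x - y).
Proof.
apply/ler_addgt0Pr => eps e0.
have [e eE He] := dist_approx y _ e0.
apply: (le_trans (dist_le x e eE)).
have := NT hN (x - y) (y - e); rewrite addrA subrK.
lra.
Qed.

Lemma dist_transl x e : e \in E -> p (x + e) = p x.
Proof.
move=> eE; apply/eqP; rewrite eq_le; apply/andP; split.
  apply: dist_glb => e' e'E.
  have -> : x - e' = x + e - (e' + e) by rewrite opprD addrACA subrr addr0.
  by apply: dist_le; rewrite memvD.
apply: dist_glb => e' e'E.
have -> : x + e - e' = x - (e' - e) by rewrite opprB addrA.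
by apply: dist_le; rewrite memvB.
Qed.

Lemma dist_conv x y t : 0 <= t <= 1 ->
  p (t *: x + (1 - t) *: y) <= t * p x + (1 - t) * p y.
Proof.
move=> /andP[t0 t1]; apply/ler_addgt0Pr => eps e0.
have [e1 e1E H1] := dist_approx x _ e0.
have [e2 e2E H2] := dist_approx y _ e0.
have t1' : 0 <= 1 - t by rewrite subr_ge0.
apply: (le_trans (dist_le _ (t *: e1 + (1 - t) *: e2) _)).
  by rewrite memvD // memvZ.
have -> : t *: x + (1 - t) *: y - (t *: e1 + (1 - t) *: e2)
   = t *: (x - e1) + (1 - t) *: (y - e2).
  by rewrite !scalerBr opprD !addrA; congr (_ - _); rewrite addrAC.
apply: (le_trans (NT hN _ _)); rewrite !NZp //.
have : t * N (x - e1) <= t * (p x + eps) by rewrite ler_wpM2l // ltW.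
have : (1 - t) * N (y - e2) <= (1 - t) * (p y + eps) by rewrite ler_wpM2l // ltW.
nra.
Qed.

Lemma dist_0 : p 0 = 0.
Proof.
apply/eqP; rewrite eq_le dist_ge0 andbT.
by rewrite (le_trans (dist_leN _)) // (N0 hN).
Qed.
End Dist.
Section DiffGen.
Context {R : realType} {d : nat}.
Local Notation V := 'rV[R]_d.

Lemma diff_small (f : V -> R^o) z : differentiable f z ->
  forall eps, 0 < eps -> exists2 del, 0 < del & forall v, `|v| < del ->
  `|f (v + z) - f z - 'd f z v| <= eps * `|v|.
Proof.
move=> Hd eps e0.
have := diff_locally Hd; move/eqaddoP => /(_ eps e0).
move/(@nbhs_norm0P R V) => [del del0 H].
exists del => // v /H /=.
by rewrite !fctE /= opprD addrA.
Qed.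

Lemma dgrad (f : V -> R^o) z u : 'd f z u = inner (grad f z) u.
Proof.
rewrite {1}(row_sum_delta u) linear_sum /inner.
apply: eq_bigr => i _; rewrite linearZ /= /grad mxE mulrC.
done.
Qed.
End DiffGen.
Section Misc.
Context {R : realType}.
Lemma le_n (a b c : R) : (forall n : nat, a <= b + c / n.+1%:R) -> a <= b.
Proof.
move=> H; apply: le_eps => e e0.
have [c0|c0] := leP c 0.
  have := H 0%N; rewrite divr1; lra.
have := Num.Theory.truncnS_gt (c / e).
set n := Num.truncn (c / e) => Hn.
have n0 : 0 < n.+1%:R :> R by rewrite ltr0n.
have : c / n.+1%:R < e.
  by rewrite ltr_pdivrMr // mulrC -ltr_pdivrMr.
have := H n; move: (c / n.+1%:R) => q; lra.
Qed.

Lemma sq_conv (a b t : R) : 0 <= t <= 1 ->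
  (t * a + (1 - t) * b) ^+ 2 <= t * a ^+ 2 + (1 - t) * b ^+ 2.
Proof.
move=> /andP[t0 t1].
have t1' : 0 <= 1 - t by rewrite subr_ge0.
have := mulr_ge0 (mulr_ge0 t0 t1') (sqr_ge0 (a - b)).
nra.
Qed.
End Misc.
Definition hh {R : realType} {d : nat} (N : 'rV[R]_d -> R) : 'rV[R]_d -> R^o :=
  fun x => N x ^+ 2 / 2.

Section Smooth.
Context {R : realType} {d : nat}.
Local Notation V := 'rV[R]_d.
Context {N : V -> R} (hN : is_norm N).

Lemma conv_comb (x y : V) t : N (t *: x + (1 - t) *: y) <= t * N x + (1 - t) * N y
  \/ ~ (0 <= t <= 1).
Proof.
have [/andP[t0 t1]|] := boolP (0 <= t <= 1); last by right; apply/negP.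
left; apply: (le_trans (NT hN _ _)); by rewrite !NZp // ?subr_ge0.
Qed.

Lemma hh_conv x y t : 0 <= t <= 1 ->
  hh N (t *: x + (1 - t) *: y) <= t * hh N x + (1 - t) * hh N y.
Proof.
move=> t01; have [H|//] := conv_comb x y t.
have S := sq_conv (N x) (N y) t t01.
have P := N_ge0 hN (t *: x + (1 - t) *: y).
rewrite /hh.
move: H S P; move: (N (t *: x + (1 - t) *: y)) (N x) (N y) => A B C.
move: t01 => /andP[t0 t1].
nra.
Qed.

Context {L : R} (hL : L_smooth N (hh N) L).
Local Notation g := (grad (hh N)).

Lemma hh_first z u : hh N z + inner (g z) u <= hh N (z + u).
Proof.
apply: le_eps => e e0.
have u1 : 0 < `|u| + 1 by rewrite ltr_pwDr // normr_ge0.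
have e'0 : 0 < e / (`|u| + 1) by rewrite divr_gt0.
have [del del0 Hd] := @diff_small _ _ (hh N) z (hL.1 z) _ e'0.
pose t := del / (del + `|u|).
have dp : 0 < del + `|u| by have := normr_ge0 u; lra.
have t0 : 0 < t by rewrite divr_gt0.
have t1 : t <= 1 by rewrite ler_pdivrMr // mul1r; have := normr_ge0 u; lra.
have tu : `|t *: u| < del.
  rewrite normrZ gtr0_norm // /t mulrAC ltr_pdivrMr // ltr_pM2l //.
  by rewrite ltrDr.
have := Hd _ tu; rewrite dgrad innerZr normrZ gtr0_norm //.
have H0 : 0 <= t <= 1 by rewrite t1 ltW.
have := hh_conv (z + u) z t H0.
have -> : t *: (z + u) + (1 - t) *: z = t *: u + z.
  by rewrite scalerDr scalerBl scale1r [t *: z + _]addrC -addrA [t *: z + _]addrC subrK.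
have eu : e / (`|u| + 1) * `|u| <= e.
  by rewrite mulrAC ler_pdivrMr // ler_pM2l // lerDl.
move: (hh N (t *: u + z)) (hh N (z + u)) (hh N z) (inner (g z) u) eu => A B C I eu.
move: (e / (`|u| + 1)) e'0 eu => e' e'0 eu.
rewrite ler_norml => H1 /andP[H2 H3].
nra.
Qed.

Lemma hh_step w w' : hh N w - hh N w' <= inner (g w) (w - w').
Proof.
have := hh_first w (w' - w); rewrite [w + _]addrC subrK.
by rewrite -opprB innerNr; lra.
Qed.

Lemma hh_desc z u : hh N (z + u) <= hh N z + inner (g z) u + L / 2 * N u ^+ 2.
Proof.
apply: (@le_n _ _ _ (L * N u ^+ 2 / 2)) => n.
set K := n.+1%:R.
have K0 : 0 < K by rewrite ltr0n.
pose s (m : nat) : R := m%:R / K.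
pose B (m : nat) : R := L * N u ^+ 2 * (m%:R * (m%:R + 1)) / (2 * K ^+ 2).
have claim m : hh N (z + s m *: u) <= hh N z + (s m * inner (g z) u + B m).
  elim: m => [|m IH].
    by rewrite /s /B !mul0r scale0r addr0 !mulr0 mul0r addr0 addr0.
  set a := z + s m *: u; set b := z + s m.+1 *: u.
  have hba : b - a = K^-1 *: u.
    rewrite /a /b /s opprD addrACA subrr add0r -scalerBl; congr (_ *: _).
    by rewrite -natr1 mulrDl addrAC subrr add0r mul1r.
  have st := hh_step b a; rewrite hba innerZr in st.
  have Hd : inner (g b - g z) u <= L * (s m.+1 * N u) * N u.
    apply: (le_trans (dual_le hN _ _)); apply: ler_wpM2r; first exact: N_ge0.
    have -> : s m.+1 * N u = N (b - z).
      by rewrite /b [_ + _ *: _]addrC addrK NZp // /s divr_ge0 // ler0n.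
    exact: hL.2.
  have st2 : hh N b <= hh N a + (K^-1 * inner (g z) u + K^-1 * (L * (s m.+1 * N u) * N u)).
    have : inner (g b) u = inner (g z) u + inner (g b - g z) u.
      by rewrite innerBl addrC subrK.
    move=> eq; rewrite eq mulrDr in st.
    have : K^-1 * inner (g b - g z) u <= K^-1 * (L * (s m.+1 * N u) * N u).
      by rewrite ler_pM2l // invr_gt0.
    move: st; move: (hh N b) (hh N a) (K^-1 * inner (g z) u) (K^-1 * inner (g b - g z) u) (K^-1 * (L * (s m.+1 * N u) * N u)).
    move=> A1 A2 A3 A4 A5 st H45.
    have st' := lerD st (lexx A2); rewrite subrK in st'.
    apply: (le_trans st'); rewrite addrC lerD2l lerD2l //.
  apply: (le_trans st2).
  have -> : s m.+1 * inner (g z) u + B m.+1 =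
      (s m * inner (g z) u + B m) + (K^-1 * inner (g z) u + K^-1 * (L * (s m.+1 * N u) * N u)).
    rewrite /s /B -!natr1.
    have K0' : K != 0 by rewrite gt_eqF.
    move: K0' (m%:R) (inner (g z) u) (N u) => K0' M I Nu.
    by field.
  by rewrite [in leRHS]addrA; apply: lerD IH (lexx _).
have := claim n.+1.
have -> : s n.+1 = 1 by rewrite /s divff // gt_eqF.
rewrite scale1r mul1r.
have -> : B n.+1 = L / 2 * N u ^+ 2 + L * N u ^+ 2 / 2 / K.
  rewrite /B -/K.
  have K0' : K != 0 by rewrite gt_eqF.
  move: K0' (N u) => K0' Nu.
  by field.
by rewrite !addrA.
Qed.
End Smooth.
Section Cont.
Context {R : realType} {d : nat}.
Local Notation V := 'rV[R]_d.

Lemma cont_sq (q : V -> R) k : continuous q -> continuous (fun y => q y ^+ 2 / k).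
Proof.
move=> cq y.
have -> : (fun y => q y ^+ 2 / k) = (fun x => (q \* q) x * k^-1).
  by apply: funext => x /=; rewrite expr2.
exact: cvgMr_tmp (cvgM (cq y) (cq y)).
Qed.

Lemma cont_add (a b : V -> R) : continuous a -> continuous b ->
  continuous (fun y => a y + b y).
Proof.
move=> ca cb y.
have -> : (fun y => a y + b y) = a + b by [].
exact: cvgD (ca y) (cb y).
Qed.
End Cont.

Section Moreau.
Context {R : realType} {d : nat}.
Local Notation V := 'rV[R]_d.
Context {Nc Ns : V -> R} (hNc : is_norm Nc) (hNs : is_norm Ns) (E : {vspace V}).
Context {theta : R} (th0 : 0 < theta).

Definition FF (x y : V) : R :=
  (dist_sub Nc E y) ^+ 2 / 2 + (Ns (x - y)) ^+ 2 / (2 * theta).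

Local Notation M := (ME Nc Ns E theta).

Lemma FF_ge0 x y : 0 <= FF x y.
Proof.
rewrite /FF; apply: addr_ge0; apply: divr_ge0; rewrite ?sqr_ge0 //.
by rewrite mulr_ge0 // ltW.
Qed.

Lemma ME_FF x : M x = inf [set FF x y | y in [set: V]].
Proof. by []. Qed.

Lemma M_le x y : M x <= FF x y.
Proof. by rewrite ME_FF; apply: infimg_le => // z _; exact: FF_ge0. Qed.

Lemma M_glb x m : (forall y, m <= FF x y) -> m <= M x.
Proof.
by move=> H; rewrite ME_FF; apply: infimg_ge; [exists 0 | move=> z _].
Qed.

Lemma M_ge0 x : 0 <= M x.
Proof. by apply: M_glb => y; exact: FF_ge0. Qed.

Lemma FF_cont x : continuous (FF x).
Proof.
apply: cont_add; apply: cont_sq.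
  have [C C0 HC] := N_upper hNc.
  apply: (@lip_cont _ _ _ C) => y y'.
  rewrite ler_norml; apply/andP; split.
    have := dist_tri hNc E y' y; rewrite NB // => H.
    have := HC (y - y'); lra.
  have := dist_tri hNc E y y'; have := HC (y - y'); lra.
have -> : (fun y => Ns (x - y)) = Ns \o (fun y => x - y) by [].
move=> y; apply: continuous_comp; last exact: N_cont.
exact: (continuousB (@cst_continuous _ _ _ _)).
Qed.

Lemma M_attained x : exists y, M x = FF x y.
Proof.
have [c c0 Hc] := N_lower hNs.
pose r := 1 + 2 * theta * FF x x / c ^+ 2.
have r1 : 1 <= r.
  rewrite /r lerDl divr_ge0 ?sqr_ge0 // mulr_ge0 ?FF_ge0 //.
  by rewrite mulr_ge0 // ltW.
pose B := [set y : V | `|x - y| <= r].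
have cB : compact B.
  apply: bounded_closed_compact; last exact: closed_closed_ball_.
  suff H : bounded_near (fun y : V => y) (globally B) by exact: H.
  rewrite /bounded_near; near=> K => y /= Hy.
  have : `|y| <= `|x| + r.
    have := ler_normD x (y - x); rewrite addrC subrK => H.
    by apply: (le_trans H); rewrite lerD2l distrC.
  move=> H; apply: (le_trans H); near: K; apply: nbhs_pinfty_ge.
  exact: num_real.
have Bx : B x by rewrite /B /= subrr normr0 (le_trans ler01).
have B0 : B !=set0 by exists x.
have cF : {within B, continuous (FF x)}.
  by apply: continuous_subspaceT; exact: FF_cont.
have [y0 /set_mem By0 Hy0] := EVT_min_rV B0 cB cF.
exists y0; apply/eqP; rewrite eq_le M_le /=.
apply: M_glb => y.
have [yB|yB] := pselect (B y); first exact: Hy0 (mem_set yB).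
apply: (le_trans (Hy0 _ (mem_set Bx))).
have Dr : r < `|x - y| by rewrite ltNge; apply/negP.
have cD := Hc (x - y).
have cr : c * r <= Ns (x - y).
  by apply: (le_trans _ cD); rewrite ler_pM2l // ltW.
have eqr : c ^+ 2 * r = c ^+ 2 + 2 * theta * FF x x.
  by rewrite /r mulrDr mulr1; congr (_ + _); field; rewrite gt_eqF.
have S2 : 2 * theta * FF x x <= Ns (x - y) ^+ 2.
  move: eqr cr r1 c0; move: (Ns (x - y)) (FF x x) => S F0 eqr cr r1 c0.
  have hc : 0 <= c * r by rewrite mulr_ge0 // ltW // (lt_le_trans ltr01).
  have := ler_pM hc hc cr cr.
  have r1' : 0 <= r - 1 by rewrite subr_ge0.
  have := mulr_ge0 (sqr_ge0 c) r1'.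
  nra.
rewrite /FF; apply: (le_trans (y := Ns (x - y) ^+ 2 / (2 * theta))).
  by rewrite ler_pdivlMr ?mulr_gt0 // mulrC.
by rewrite lerDr divr_ge0 ?sqr_ge0.
Unshelve. all: by end_near. Qed.

Lemma f_conv y y' t : 0 <= t <= 1 ->
  dist_sub Nc E (t *: y + (1 - t) *: y') ^+ 2 / 2 <=
  t * (dist_sub Nc E y ^+ 2 / 2) + (1 - t) * (dist_sub Nc E y' ^+ 2 / 2).
Proof.
move=> t01.
have H := dist_conv hNc E y y' t t01.
have S := sq_conv (dist_sub Nc E y) (dist_sub Nc E y') t t01.
have P := dist_ge0 hNc E (t *: y + (1 - t) *: y').
have P1 := dist_ge0 hNc E y.
have P2 := dist_ge0 hNc E y'.
move: t01 => /andP[t0 t1].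
move: H S P P1 P2; move: (dist_sub Nc E (t *: y + (1 - t) *: y')) (dist_sub Nc E y) (dist_sub Nc E y') => A B C.
nra.
Qed.

Lemma M_conv x x' t : 0 <= t <= 1 ->
  M (t *: x + (1 - t) *: x') <= t * M x + (1 - t) * M x'.
Proof.
move=> t01.
have [y Hy] := M_attained x.
have [y' Hy'] := M_attained x'.
apply: (le_trans (M_le _ (t *: y + (1 - t) *: y'))).
rewrite Hy Hy' /FF.
have -> : t *: x + (1 - t) *: x' - (t *: y + (1 - t) *: y') =
    t *: (x - y) + (1 - t) *: (x' - y').
  by rewrite !scalerBr opprD !addrA; congr (_ - _); rewrite addrAC.
have H1 := f_conv y y' t t01.
have H2 := hh_conv hNs (x - y) (x' - y') t t01.
rewrite /hh in H2.
have eq (a : R) : a ^+ 2 / (2 * theta) = (a ^+ 2 / 2) / theta.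
  by rewrite invfM mulrA.
rewrite !eq.
have th' : 0 < theta^-1 by rewrite invr_gt0.
have H3 := ler_wpM2r (ltW th') H2.
move: H1 H3; move: (dist_sub Nc E (t *: y + (1 - t) *: y') ^+ 2 / 2)
  (dist_sub Nc E y ^+ 2 / 2) (dist_sub Nc E y' ^+ 2 / 2)
  (Ns (t *: (x - y) + (1 - t) *: (x' - y')) ^+ 2 / 2)
  (Ns (x - y) ^+ 2 / 2) (Ns (x' - y') ^+ 2 / 2) => A B C D D1 D2 H1 H3.
move: (theta^-1) th' H3 => it it0 H3.
nra.
Qed.

Lemma M_transl x e : e \in E -> M (x + e) = M x.
Proof.
have key x' e' : e' \in E -> M (x' + e') <= M x'.
  move=> e'E; apply: M_glb => y.
  apply: (le_trans (M_le _ (y + e'))).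
  by rewrite /FF dist_transl // opprD addrACA subrr addr0.
move=> eE; apply/eqP; rewrite eq_le key //=.
have := key (x + e) (- e); rewrite addrK; apply.
by rewrite memvN.
Qed.
End Moreau.
Section Lower.
Context {R : realType} {d : nat}.
Local Notation V := 'rV[R]_d.

Lemma lower_from_upper (m : V -> R) (N : V -> R) (hN : is_norm N) x G K :
  (forall a b t, 0 <= t <= 1 -> m (t *: a + (1 - t) *: b) <= t * m a + (1 - t) * m b) ->
  (forall u, m (x + u) <= m x + inner G u + K * N u ^+ 2) ->
  forall u, m x + inner G u <= m (x + u).
Proof.
move=> Hc Hu u.
apply: (@le_n _ _ _ (K * N u ^+ 2)) => n.
set k := n.+1%:R.
have k0 : 0 < k by rewrite ltr0n.
pose t := k^-1.
have t0 : 0 < t by rewrite invr_gt0.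
have t1 : t <= 1 by rewrite invf_le1 // ler1n.
have t01 : 0 <= t <= 1 by rewrite ltW.
have ha : (0 : R) <= 2^-1 by lra.
have hb : (2^-1 : R) <= 1 by lra.
have h01 : (0 : R) <= (2^-1 : R) <= 1 by rewrite ha hb.
have H1 := Hc (x + u) x t t01.
have e1 : t *: (x + u) + (1 - t) *: x = x + t *: u.
  by apply/rowP => i; rewrite !mxE; ring.
rewrite e1 in H1.
have H2 := Hc (x + t *: u) (x - t *: u) 2^-1 h01.
have e2 : 2^-1 *: (x + t *: u) + (1 - 2^-1) *: (x - t *: u) = x.
  by apply/rowP => i; rewrite !mxE; field.
rewrite e2 in H2.
have H3 := Hu (- (t *: u)).
have tg : 0 <= t := ltW t0.
rewrite innerNr innerZr (NN hN) (NZp hN t u tg) exprMn mulrCA in H3.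
have e3 : 1 - 2^-1 = 2^-1 :> R by rewrite {1}(splitr 1) mul1r addrK.
rewrite e3 in H2.
rewrite -/t.
have e : K * N u ^+ 2 / k = t * (K * N u ^+ 2) by rewrite mulrC.
rewrite e.
move: H1 H2 H3; move: (m (x + u)) (m x) (m (x + t *: u)) (m (x + - (t *: u)))
  (inner G u) (K * N u ^+ 2) => A B C D I Q H1 H2 H3.
move: t0 t1 => t0 t1.
have LH : t * (B + I - A - t * Q) <= 0.
  have -> : t * (B + I - A - t * Q) = t * B + t * I - t * A - t ^+ 2 * Q by ring.
  move: H1 H2 H3.
  have -> : (1 - t) * B = B - t * B by ring.
  move: (t * A) (t * B) (t * I) (t ^+ 2 * Q) => tA tB tI tQ H1 H2 H3.
  lra.
rewrite pmulr_rle0 // in LH.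
lra.
Qed.
End Lower.
Section Main.
Context {R : realType} {d : nat}.
Local Notation V := 'rV[R]_d.
Context {Nc Ns : V -> R} (hNc : is_norm Nc) (hNs : is_norm Ns) (E : {vspace V}).
Context {theta : R} (th0 : 0 < theta).
Context {L : R} (hL : L_smooth Ns (hh Ns) L).
Local Notation M := (ME Nc Ns E theta).
Local Notation K2 := (L / (2 * theta)).

Lemma M_upper x : exists G, forall u, M (x + u) <= M x + inner G u + K2 * Ns u ^+ 2.
Proof.
have [y Hy] := M_attained hNc hNs E th0 x.
exists (theta^-1 *: grad (hh Ns) (x - y)) => u.
apply: (le_trans (M_le E th0 (x + u) y)).
rewrite Hy /FF innerZl.
have D := hh_desc hNs hL (x - y) u.
have -> : x + u - y = x - y + u by apply/rowP => i; rewrite !mxE; ring.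
rewrite /hh in D.
have it0 : 0 < theta^-1 by rewrite invr_gt0.
have D' := ler_wpM2r (ltW it0) D.
have eqs (a : R) : a / (2 * theta) = a / 2 * theta^-1 by rewrite invfM mulrA.
rewrite !eqs.
have -> : L / 2 * theta^-1 * Ns u ^+ 2 = (L / 2 * Ns u ^+ 2) * theta^-1 by ring.
rewrite !mulrDl in D'.
move: D'; move: (dist_sub Nc E y ^+ 2 / 2) (Ns (x - y + u) ^+ 2 / 2) (Ns (x - y) ^+ 2 / 2)
  (inner (grad (hh Ns) (x - y)) u) (L / 2 * Ns u ^+ 2) (theta^-1) => P A B I S it D'.
rewrite [it * I]mulrC.
lra.
Qed.

Lemma M_bounds x : exists G,
  (forall u, M (x + u) <= M x + inner G u + K2 * Ns u ^+ 2) /\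
  (forall u, M x + inner G u <= M (x + u)).
Proof.
have [G HG] := M_upper x.
exists G; split => //.
apply: (lower_from_upper (ME Nc Ns E theta) Ns hNs x G (L / (2 * theta)) _ HG).
move=> a b t; exact: (M_conv hNc hNs E th0).
Qed.

Lemma M_diff x : exists G,
  [/\ differentiable (M : V -> R^o) x, grad M x = G,
   (forall u, M (x + u) <= M x + inner G u + K2 * Ns u ^+ 2) &
   (forall u, M x + inner G u <= M (x + u))].
Proof.
have [G [Hu Hl]] := M_bounds x.
have [C C0 HC] := N_upper hNs.
have Hq : forall h, `|M (h + x) - M x - inner G h| <= (`|K2| * C ^+ 2) * `|h| ^+ 2.
  move=> h; rewrite [h + x]addrC.
  have l := Hl h; have uu := Hu h.
  have v0 : 0 <= M (x + h) - M x - inner G h by lra.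
  rewrite ger0_norm //.
  have n0 := N_ge0 hNs h.
  have nC := HC h.
  have : K2 * Ns h ^+ 2 <= `|K2| * (C ^+ 2 * `|h| ^+ 2).
    apply: (le_trans (ler_norm _)); rewrite normrM ler_wpM2l //.
    rewrite ger0_norm ?sqr_ge0 // -exprMn.
    by rewrite lerXn2r // ?nnegrE // mulr_ge0 // normr_ge0.
  rewrite -mulrA; lra.
have [Hd Hdf] := @diff_quad _ _ (M : V -> R^o) x G _ Hq.
exists G; split => //.
apply/rowP => i; rewrite /grad mxE Hdf /=.
exact: inner_delta.
Qed.
End Main.
Section Conv.
Context {R : realType} {d : nat}.
Local Notation V := 'rV[R]_d.
Lemma conv_test (m : V -> R) :
  (forall a b t, 0 <= t <= 1 -> m (t *: a + (1 - t) *: b) <= t * m a + (1 - t) * m b) ->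
  convex_function [set: convex_lmodType V] (m : V -> R^o).
Proof.
move=> H t x y _ _.
have t01 : 0 <= t%:inum <= 1 by rewrite ge0 le1.
exact: (H x y t%:inum t01).
Qed.
End Conv.

Section Reals.
Context {R : realType}.
Lemma quad_final (D K P : R) : 0 <= D -> 0 <= K -> 0 <= P ->
  (forall r, 0 <= r -> 2 * r * D <= K * r ^+ 2 + D * P) -> D <= K * P.
Proof.
move=> D0 K0 P0 H.
have [K00|Kp] := eqVneq K 0.
  have := H (P + 1) (addr_ge0 P0 ler01); rewrite K00 => h; nra.
have Kp' : 0 < K by rewrite lt_neqAle eq_sym Kp.
have := H (D / K); rewrite divr_ge0 // => /(_ isT) h.
have e1 : K * (D / K) ^+ 2 = D * (D / K) by field.
rewrite e1 in h.
have e2 : 2 * (D / K) * D = 2 * (D * (D / K)) by ring.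
rewrite e2 in h.
have h2 : D * (D / K) <= D * P by lra.
have [D00|Dp] := eqVneq D 0; first by rewrite D00 mulr_ge0.
have Dp' : 0 < D by rewrite lt_neqAle eq_sym Dp.
rewrite ler_pM2l // ler_pdivrMr // in h2.
by rewrite mulrC.
Qed.
End Reals.
Section Final.
Context {R : realType} {d : nat}.
Local Notation V := 'rV[R]_d.
Context {Nc Ns : V -> R} (hNc : is_norm Nc) (hNs : is_norm Ns) (E : {vspace V}).
Context {theta : R} (th0 : 0 < theta).
Context {L : R} (hL : L_smooth Ns (hh Ns) L).
Local Notation M := (ME Nc Ns E theta).

Lemma L_cases : 0 <= L \/ forall v : V, v = 0.
Proof.
have [[v v0]|nv] := pselect (exists v : V, v != 0); [left|right].
  have := hL.2 v 0; rewrite subr0.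
  have Nv : 0 < Ns v.
    rewrite lt_neqAle N_ge0 // andbT; apply/eqP => /esym /(N_eq0 hNs).
    by apply/eqP.
  have := dual_ge0 hNs (grad (hh Ns) v - grad (hh Ns) 0).
  move: (dual_norm Ns _) => D D0 h.
  have : 0 <= L * Ns v by apply: le_trans h.
  by rewrite pmulr_lge0.
move=> v; apply/eqP/negPn/negP => hv; apply: nv; by exists v.
Qed.

Lemma orth x G : (forall u, M x + inner G u <= M (x + u)) ->
  forall e, e \in E -> inner G e = 0.
Proof.
move=> Hl e eE.
have h1 := Hl e; rewrite (M_transl hNc E th0 x e eE) in h1.
have h2 := Hl (- e); rewrite (M_transl hNc E th0 x (- e)) ?memvN // innerNr in h2.
lra.
Qed.

Lemma part1 x y : M y <= M x + inner (grad M x) (y - x)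
                       + L / (2 * theta) * (dist_sub Ns E (y - x)) ^+ 2.
Proof.
have [G [Hd HgG Hu Hl]] := M_diff hNc hNs E th0 hL x.
rewrite HgG.
have key e : e \in E ->
    M y <= M x + inner G (y - x) + L / (2 * theta) * Ns (y - x - e) ^+ 2.
  move=> eE; have := Hu (y - x - e).
  rewrite [inner G (y - x - e)]innerBr (orth _ _ Hl _ eE) subr0.
  have -> : x + (y - x - e) = y + (- e) by apply/rowP => i; rewrite !mxE; ring.
  by rewrite (M_transl hNc E th0 y (- e)) ?memvN.
have [L0|triv] := L_cases; last first.
  have yx : y = x by rewrite (triv y) (triv x).
  rewrite yx subrr inner0r dist_0 // expr0n /= mulr0 !addr0.
  done.
have K0 : 0 <= L / (2 * theta) by rewrite divr_ge0 // mulr_ge0 // ltW.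
set p := dist_sub Ns E (y - x).
have p0 : 0 <= p := dist_ge0 hNs E (y - x).
apply: (@le_n _ _ _ (L / (2 * theta) * (2 * p + 1))) => n.
set k := n.+1%:R.
have k0 : 0 < k by rewrite ltr0n.
have ik0 : 0 < k^-1 by rewrite invr_gt0.
have ik1 : k^-1 <= 1 by rewrite invf_le1 // ler1n.
have [e eE He] := dist_approx hNs E (y - x) _ ik0.
apply: (le_trans (key e eE)).
have n0 := N_ge0 hNs (y - x - e).
have sq : Ns (y - x - e) ^+ 2 <= p ^+ 2 + (2 * p + 1) * k^-1.
  move: He n0 ik0 ik1 p0; move: (Ns (y - x - e)) (k^-1) => a b He n0 ik0 ik1 p0.
  nra.
have := ler_wpM2l K0 sq.
rewrite -/p.
have -> : L / (2 * theta) * (2 * p + 1) / k = L / (2 * theta) * ((2 * p + 1) * k^-1) by ring.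
move: (L / (2 * theta) * Ns (y - x - e) ^+ 2) => A.
rewrite mulrDr.
move: (L / (2 * theta) * p ^+ 2) (L / (2 * theta) * ((2 * p + 1) * k^-1)) => B C.
lra.
Qed.


Lemma part3 x y : dual_norm Ns (grad M x - grad M y) <= L / theta * dist_sub Ns E (x - y).
Proof.
have [Gx [_ Hgx Hux Hlx]] := M_diff hNc hNs E th0 hL x.
have [Gy [_ Hgy Huy Hly]] := M_diff hNc hNs E th0 hL y.
rewrite Hgx Hgy.
set g := Gx - Gy.
set D := dual_norm Ns g.
set P := dist_sub Ns E (x - y).
have D0 : 0 <= D := dual_ge0 hNs g.
have P0 : 0 <= P := dist_ge0 hNs E (x - y).
have [L0|triv] := L_cases; last first.
  have yx : y = x by rewrite (triv y) (triv x).
  have g0 : g = 0 by rewrite /g (triv Gx) (triv Gy) subrr.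
  rewrite /P yx subrr dist_0 // mulr0.
  apply: le_eps => e e0.
  have [w _ Hw] := dual_adh hNs g _ e0.
  by move: Hw; rewrite -/D g0 inner0l add0r; lra.
have og e : e \in E -> inner g e = 0.
  by move=> eE; rewrite /g innerBl (orth _ _ Hlx _ eE) (orth _ _ Hly _ eE) subrr.
have gxy : inner g (x - y) <= D * P.
  have [D00|Dp] := eqVneq D 0.
    have := dual_le hNs g (x - y); rewrite -/D D00 !mul0r //.
  have Dp' : 0 < D by rewrite lt_neqAle eq_sym Dp.
  rewrite mulrC -ler_pdivrMr //.
  apply: dist_glb => e eE.
  rewrite ler_pdivrMr // mulrC.
  have := dual_le hNs g (x - y - e).
  by rewrite [inner g (x - y - e)]innerBr (og e eE) subr0.
set K2 := L / (2 * theta).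
have K20 : 0 <= K2 by rewrite divr_ge0 // mulr_ge0 // ltW.
have main r : 0 <= r -> 2 * r * D <= (L / theta) * r ^+ 2 + D * P.
  move=> r0.
  apply: (@le_n _ _ _ (2 * r)) => n.
  set k := n.+1%:R.
  have k0 : 0 < k by rewrite ltr0n.
  have ik0 : 0 < k^-1 by rewrite invr_gt0.
  have [w Nw Hw] := dual_adh hNs g _ ik0.
  rewrite -/D in Hw.
  have Nw0 := N_ge0 hNs w.
  have ew : Ns (r *: w) ^+ 2 <= r ^+ 2.
    rewrite NZp // exprMn -[X in _ <= X]mulr1 ler_wpM2l ?sqr_ge0 //.
    by rewrite expr_le1.
  have A1 := Hlx (y + r *: w - x).
  have A2 := Huy (r *: w).
  have B1 := Hly (x - r *: w - y).
  have B2 := Hux (- (r *: w)).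
  rewrite (NN hNs) in B2.
  have e1 : x + (y + r *: w - x) = y + r *: w by apply/rowP => i; rewrite !mxE; ring.
  have e2 : y + (x - r *: w - y) = x + - (r *: w) by apply/rowP => i; rewrite !mxE; ring.
  rewrite e1 innerBr innerDr innerZr in A1.
  rewrite innerZr in A2.
  rewrite e2 innerBr innerBr innerZr in B1.
  rewrite innerNr innerZr in B2.
  rewrite /g innerBl innerBr innerBr in gxy.
  rewrite /g innerBl in Hw.
  have ew2 := ler_wpM2l K20 ew.
  have eK : L / theta = 2 * K2 by rewrite /K2; field; rewrite gt_eqF.
  rewrite eK.
  have Hw2 : 2 * r * (D - k^-1) <= 2 * r * (inner Gx w - inner Gy w).
    by rewrite ler_wpM2l ?mulr_ge0 // ltW.
  move: A1 A2 B1 B2 gxy Hw2 ew2.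
  move: (M x) (M y) (M (y + r *: w)) (M (x + - (r *: w))) => mx my m1 m2.
  move: (inner Gx x) (inner Gx y) (inner Gx w) (inner Gy x) (inner Gy y) (inner Gy w) => a b c a' b' c'.
  move: (K2 * Ns (r *: w) ^+ 2) => S.
  move=> A1 A2 B1 B2 gxy Hw2 ew2.
  have eqa : 2 * r * (D - k^-1) = 2 * (r * D) - 2 * (r * k^-1) by ring.
  have eqb : 2 * r * (c - c') = 2 * (r * c) - 2 * (r * c') by ring.
  have eqc : 2 * r / k = 2 * (r * k^-1) by ring.
  have eqd : 2 * r * D = 2 * (r * D) by ring.
  have eqe : 2 * K2 * r ^+ 2 = 2 * (K2 * r ^+ 2) by ring.
  rewrite eqa eqb in Hw2; rewrite eqc eqd eqe.
  move: A1 A2 B1 B2 gxy Hw2 ew2.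
  move: (r * D) (r * k^-1) (r * c) (r * c') (K2 * r ^+ 2) (D * P) => t1 t2 t3 t4 t5 t6.
  lra.
apply: quad_final => //.
  by rewrite divr_ge0 // ltW.
Qed.
End Final.
Section Part2.
Context {R : realType} {d : nat}.
Local Notation V := 'rV[R]_d.
Context {Nc Ns : V -> R} (hNc : is_norm Nc) (hNs : is_norm Ns) (E : {vspace V}).
Context {theta : R} (th0 : 0 < theta).
Local Notation M := (ME Nc Ns E theta).

Lemma part2_upper ucs : 0 < ucs -> (forall x, Nc x <= ucs * Ns x) ->
  forall x, dist_sub Nc E x ^+ 2 / 2 <= (1 + theta * ucs ^+ 2) * M x.
Proof.
move=> u0 Hu x.
set P := dist_sub Nc E x.
have P0 : 0 <= P := dist_ge0 hNc E x.
have c0 : 0 < 1 + theta * ucs ^+ 2 by rewrite ltr_pwDl // mulr_ge0 ?sqr_ge0 // ltW.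
rewrite -ler_pdivrMl //.
apply: M_glb => y.
rewrite ler_pdivrMl // /FF.
have h1 := dist_tri hNc E x y.
have h2 := Hu (x - y).
have a0 := dist_ge0 hNc E y.
have b0 := N_ge0 hNs (x - y).
have Pb : P <= dist_sub Nc E y + ucs * Ns (x - y) by rewrite /P; lra.
move: Pb a0 b0; move: (dist_sub Nc E y) (Ns (x - y)) => a b Pb a0 b0.
set q := b / theta.
have q0 : 0 <= q by rewrite /q divr_ge0 // ltW.
have bq : b = theta * q by rewrite /q mulrC divfK // gt_eqF.
rewrite bq in Pb b0 *.
have e1 : (theta * q) ^+ 2 / (2 * theta) = theta * q ^+ 2 / 2.
  by field; rewrite gt_eqF.
rewrite e1.
have hint := mulr_ge0 (ltW th0) (sqr_ge0 (q - ucs * a)).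
have hP : P ^+ 2 <= (a + ucs * (theta * q)) ^+ 2.
  have h := mulr_ge0 (ltW u0) (mulr_ge0 (ltW th0) q0). rewrite lerXn2r ?nnegrE //; lra.
nra.
Qed.

Lemma part2_lower lcs : 0 < lcs -> (forall x, lcs * Ns x <= Nc x) ->
  forall x, (1 + theta * lcs ^+ 2) * M x <= dist_sub Nc E x ^+ 2 / 2.
Proof.
move=> l0 Hl x.
set P := dist_sub Nc E x.
have P0 : 0 <= P := dist_ge0 hNc E x.
set s := theta * lcs ^+ 2.
have s0 : 0 < s by rewrite mulr_gt0 // exprn_gt0.
have c0 : 0 < 1 + s by rewrite ltr_pwDl // ltW.
set t := (1 + s)^-1.
have t0 : 0 < t by rewrite invr_gt0.
have t1 : t <= 1 by rewrite invf_le1 // lerDl ltW.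
have Mle e : e \in E -> M x <= Nc (x - e) ^+ 2 / (2 * (1 + s)).
  move=> eE.
  set w := x - e.
  set W := Nc w.
  have W0 : 0 <= W := N_ge0 hNc w.
  apply: (le_trans (M_le E th0 x (e + t *: w))).
  rewrite /FF.
  have ha : dist_sub Nc E (e + t *: w) <= t * W.
    have := dist_le hNc E (e + t *: w) e eE.
    by rewrite addrC addrK NZp // ltW.
  have xy : x - (e + t *: w) = (1 - t) *: w.
    by rewrite /w; apply/rowP => i; rewrite !mxE; ring.
  have hb : lcs * Ns (x - (e + t *: w)) <= (1 - t) * W.
    have t1' : 0 <= 1 - t by rewrite subr_ge0.
    by rewrite xy /W -(NZp hNc (1 - t) w t1'); apply: Hl.
  have a0 := dist_ge0 hNc E (e + t *: w).
  have b0 := N_ge0 hNs (x - (e + t *: w)).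
  move: ha hb a0 b0; move: (dist_sub Nc E (e + t *: w)) (Ns (x - (e + t *: w))) => a b ha hb a0 b0.
  have ha2 : a ^+ 2 <= (t * W) ^+ 2 by rewrite lerXn2r // ?nnegrE // mulr_ge0 // ltW.
  have hb2 : (lcs * b) ^+ 2 <= ((1 - t) * W) ^+ 2.
    by rewrite lerXn2r // ?nnegrE // mulr_ge0 // ?subr_ge0 // ltW.
  have et : 1 - t = s * t by rewrite /t; field; rewrite gt_eqF.
  rewrite et in hb2.
  have eb : b ^+ 2 / (2 * theta) = (lcs * b) ^+ 2 / (2 * s).
    by rewrite /s; field; rewrite !gt_eqF.
  rewrite eb.
  have eW : W ^+ 2 / (2 * (1 + s)) = (t * W) ^+ 2 / 2 + (s * t * W) ^+ 2 / (2 * s).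
    by rewrite /t; field; rewrite !gt_eqF.
  rewrite eW.
  apply: lerD; first by rewrite ler_pM2r // invr_gt0.
  by rewrite ler_pM2r // invr_gt0 mulr_gt0.
rewrite -ler_pdivlMl //.
have eq : (1 + s)^-1 * (P ^+ 2 / 2) = P ^+ 2 / (2 * (1 + s)).
  by field; rewrite gt_eqF.
rewrite eq.
apply: (@le_n _ _ _ ((2 * P + 1) / (2 * (1 + s)))) => n.
set k := n.+1%:R.
have k0 : 0 < k by rewrite ltr0n.
have ik0 : 0 < k^-1 by rewrite invr_gt0.
have ik1 : k^-1 <= 1 by rewrite invf_le1 // ler1n.
have [e eE He] := dist_approx hNc E x _ ik0.
apply: (le_trans (Mle e eE)).
rewrite -/P in He.
have n0 := N_ge0 hNc (x - e).
have sq : Nc (x - e) ^+ 2 <= P ^+ 2 + (2 * P + 1) * k^-1.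
  move: He n0 ik0 ik1 P0; move: (Nc (x - e)) (k^-1) => a b He n0 ik0 ik1 P0.
  nra.
have e2 : P ^+ 2 / (2 * (1 + s)) + (2 * P + 1) / (2 * (1 + s)) / k
   = (P ^+ 2 + (2 * P + 1) * k^-1) / (2 * (1 + s)) by field; rewrite !gt_eqF.
rewrite e2 ler_pM2r // invr_gt0 mulr_gt0 //.
Qed.
End Part2.

Theorem proposition2 (R : realType) (d : nat) (E : {vspace 'rV[R]_d})
  (Nc Ns : 'rV[R]_d -> R) (L theta : R) :
  is_norm Nc -> is_norm Ns ->
  L_smooth Ns (fun x => (Ns x) ^+ 2 / 2) L ->
  0 < theta ->
  let M := ME Nc Ns E theta in
  (* (1) *)
  ((forall x, differentiable (M : 'rV[R]_d -> R^o) x) /\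
   convex_function [set: convex_lmodType 'rV[R]_d] M /\
   (forall x y, M y <= M x + inner (grad M x) (y - x)
                       + L / (2 * theta) * (dist_sub Ns E (y - x)) ^+ 2)) /\
  (* (2) *)
  (forall lcs ucs : R, 0 < lcs -> 0 < ucs ->
     (forall x, lcs * Ns x <= Nc x /\ Nc x <= ucs * Ns x) ->
     let lcm := Num.sqrt (1 + theta * lcs ^+ 2) in
     let ucm := Num.sqrt (1 + theta * ucs ^+ 2) in
     forall x, lcm ^+ 2 * M x <= (dist_sub Nc E x) ^+ 2 / 2 /\
               (dist_sub Nc E x) ^+ 2 / 2 <= ucm ^+ 2 * M x) /\
  (* (3) *)
  (forall x y, dual_norm Ns (grad M x - grad M y)
                 <= L / theta * dist_sub Ns E (x - y)).
Proof.
move=> hNc hNs hL th0 M.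
have hL' : L_smooth Ns (hh Ns) L := hL.
split; [split; [|split] | split].
- move=> x; have [G [Hd _ _ _]] := M_diff hNc hNs E th0 hL' x; exact: Hd.
- apply: conv_test => a b t t01; exact: (M_conv hNc hNs E th0 a b t t01).
- move=> x y; exact: (part1 hNc hNs E th0 hL' x y).
- move=> lcs ucs l0 u0 H lcm ucm x.
  have g1 : 0 <= 1 + theta * lcs ^+ 2 by rewrite addr_ge0 // mulr_ge0 ?sqr_ge0 // ltW.
  have g2 : 0 <= 1 + theta * ucs ^+ 2 by rewrite addr_ge0 // mulr_ge0 ?sqr_ge0 // ltW.
  rewrite /lcm /ucm !sqr_sqrtr //; split.
    exact: (part2_lower hNc hNs E th0 lcs l0 (fun x => (H x).1) x).
  exact: (part2_upper hNc hNs E th0 ucs u0 (fun x => (H x).2) x).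
- move=> x y; exact: (part3 hNc hNs E th0 hL' x y).
Qed.
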